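(* Let $M=N=2$, let $\lambda_1,\lambda_2>0$ with $\lambda_1+\lambda_2<1$, let $\beta_1>\beta_2>0$, and let $D_1(\gamma)=D_2(\gamma)=1/(1-\gamma)$ for $\gamma\in[0,1)$ (two identical $M/M/1$ queues of unit service rate). Writing $p_1=p_{11}$, $p_2=p_{21}$, $\gamma_1=\lambda_1p_1+\lambda_2p_2$, $\gamma_2=\lambda_1(1-p_1)+\lambda_2(1-p_2)$, the function $U(p_1,p_2)=\beta_1\lambda_1\bigl(p_1D_1(\gamma_1)+(1-p_1)D_2(\gamma_2)\bigr)+\beta_2\lambda_2\bigl(p_2D_1(\gamma_1)+(1-p_2)D_2(\gamma_2)\bigr)$ is not convex on $[0,1]^2$. Consequently, the social cost minimization problem $\min_P U(P)$ over right stochastic matrices is in general not a convex optimization problem.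
   Context: Here $p_{ij}$ is the probability that a class-$i$ customer (Poisson arrivals of rate $\lambda_i$, delay sensitivity $\beta_i$) is routed to queue $j$, and $D_j(\gamma)$ is the mean sojourn time at queue $j$ when its arrival rate is $\gamma$. *)

(* Defs.v *)
From Stdlib Require Import Reals.
Open Scope R_scope.

Definition D (g : R) : R := 1 / (1 - g).

Definition U (l1 l2 b1 b2 : R) (p1 p2 : R) : R :=
  let g1 := l1 * p1 + l2 * p2 in
  let g2 := l1 * (1 - p1) + l2 * (1 - p2) in
  b1 * l1 * (p1 * D g1 + (1 - p1) * D g2)
  + b2 * l2 * (p2 * D g1 + (1 - p2) * D g2).

Definition in_unit_square (x y : R) : Prop := 0 <= x <= 1 /\ 0 <= y <= 1.

Definition convex_on_unit_square (f : R -> R -> R) : Prop :=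
  forall x1 y1 x2 y2 t,
    in_unit_square x1 y1 -> in_unit_square x2 y2 -> 0 <= t <= 1 ->
    f (t * x1 + (1 - t) * x2) (t * y1 + (1 - t) * y2)
      <= t * f x1 y1 + (1 - t) * f x2 y2.

(* Main.v *)
Require Import Defs.
From Stdlib Require Import Reals Lra Psatz.
Open Scope R_scope.

Theorem mainTheorem3 (l1 l2 b1 b2 : R)
  (hl1 : 0 < l1) (hl2 : 0 < l2) (hl : l1 + l2 < 1)
  (hb : b1 > b2) (hb2 : b2 > 0) :
  ~ convex_on_unit_square (U l1 l2 b1 b2).
Proof.
  intro Hc.
  set (e := (b1 - b2) * l2 / (16 * b1)).
  assert (he0 : 0 < e) by (unfold e; apply Rdiv_lt_0_compat; nra).
  assert (he1 : e * (16 * b1) = (b1 - b2) * l2) by (unfold e; field; lra).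
  set (u := - l2 / 4 + e). set (v := l1 / 4).
  assert (heb : e < l2 / 16) by nra.
  specialize (Hc (1/2 + u) (1/2 + v) (1/2 - u) (1/2 - v) (1/2)).
  assert (H : U l1 l2 b1 b2 (1/2) (1/2) <=
     1/2 * U l1 l2 b1 b2 (1/2 + u) (1/2 + v) + (1 - 1/2) * U l1 l2 b1 b2 (1/2 - u) (1/2 - v)).
  { replace (1/2 * (1/2 + u) + (1 - 1/2) * (1/2 - u)) with (1/2) in Hc by field.
    replace (1/2 * (1/2 + v) + (1 - 1/2) * (1/2 - v)) with (1/2) in Hc by field.
    apply Hc; unfold in_unit_square, u, v; lra. }
  clear Hc.
  set (m := (l1 + l2) / 2). set (d := l1 * e).
  assert (hd : 0 < d) by (unfold d; nra).
  assert (hdm : d < 1 - m) by (unfold d, m; nra).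
  set (X := D (m + d)). set (Y := D (m - d)). set (Z := D m).
  unfold U in H.
  replace (l1 * (1/2 + u) + l2 * (1/2 + v)) with (m + d) in H by (unfold m, d, u, v; field).
  replace (l1 * (1 - (1/2 + u)) + l2 * (1 - (1/2 + v))) with (m - d) in H by (unfold m, d, u, v; field).
  replace (l1 * (1/2 - u) + l2 * (1/2 - v)) with (m - d) in H by (unfold m, d, u, v; field).
  replace (l1 * (1 - (1/2 - u)) + l2 * (1 - (1/2 - v))) with (m + d) in H by (unfold m, d, u, v; field).
  replace (l1 * (1/2) + l2 * (1/2)) with m in H by (unfold m; field).
  replace (l1 * (1 - 1/2) + l2 * (1 - 1/2)) with m in H by (unfold m; field).
  fold X Y Z in H.
  set (K := (1 - m) * (1 - m) - d * d).
  assert (hK : 0 < K) by (unfold K; nra).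
  assert (hm : 0 < 1 - m) by (unfold m; lra).
  assert (EX : X - Y = 2 * d / K).
  { unfold X, Y, D, K. field; repeat split; nra. }
  assert (EZ : X + Y - 2 * Z = 2 * d * d / ((1 - m) * K)).
  { unfold X, Y, Z, D, K. field; repeat split; nra. }
  set (C := b1 * l1 + b2 * l2).
  set (dA := b1 * l1 * u + b2 * l2 * v).
  assert (Hsum : C * (X + Y - 2 * Z) + 2 * dA * (X - Y) >= 0).
  { match type of H with ?L <= ?R =>
      assert (Eq : 2 * (R - L) = C * (X + Y - 2 * Z) + 2 * dA * (X - Y))
        by (unfold C, dA; field) end.
    lra. }
  rewrite EX, EZ in Hsum.
  assert (hkey : 2 * dA + C * d / (1 - m) < 0).
  { assert (C * d / (1 - m) < 2 * b1 * d).
    { apply (Rmult_lt_reg_r (1 - m)); [lra|].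
      replace (C * d / (1 - m) * (1 - m)) with (C * d) by (field; lra).
      assert (C < 2 * b1 * (1 - m)) by (unfold C, m; nra).
      nra. }
    assert (E2 : 2 * dA + 2 * b1 * d = - (b1 - b2) * l1 * l2 / 4).
    { unfold dA, u, v, d.
      unfold e. field. lra. }
    assert (0 < (b1 - b2) * l1 * l2) by (apply Rmult_lt_0_compat; [apply Rmult_lt_0_compat|]; lra).
    lra. }
  assert (Hneg : C * (2 * d * d / ((1 - m) * K)) + 2 * dA * (2 * d / K)
           = (2 * d / K) * (2 * dA + C * d / (1 - m))).
  { field; lra. }
  rewrite Hneg in Hsum.
  assert (0 < 2 * d / K) by (apply Rdiv_lt_0_compat; lra).
  nra.
Qed.
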